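(* The sequence of functions $V^n$ converges uniformly on $[0,\infty)\times[0,\bar c]$ to $\bar V$.
   Context: Let $(W_t)_{t\ge0}$ be a standard Brownian motion and $X_t=x+\mu t+\sigma W_t$ with constants $\mu\in\mathbb R$, $\sigma>0$ and initial value $x\ge 0$; $(\mathcal F_t)_{t\ge0}$ is the completed filtration generated by $X$. Fix $q>0$, $\Lambda>0$, $\bar c>0$. For a set $S\subset[0,\bar c]$, $x\ge0$ and $c\in S$, $\Pi^S_{x,c}$ denotes the set of processes $C=(C_t)_{t\ge0}$ that are non-increasing, right-continuous, $(\mathcal F_t)$-adapted, take values in $S$, and satisfy $C_t\le c$ for all $t\ge 0$ (an immediate reduction at time $0$ is allowed). For such $C$, $X^C_t=X_t-\int_0^t C_s\,ds$, $\tau=\inf\{t\ge0: X^C_t<0\}$, $J(x;C)=\mathbb E\big[\int_0^{\tau}e^{-qs}(C_s+\Lambda)\,ds\big]$ and $V^S(x,c)=\sup_{C\in\Pi^S_{x,c}}J(x;C)$. Let $(\mathcal S^n)_{n\ge0}$ be finite sets with $\{0,\bar c\}=\mathcal S^0\subset\mathcal S^1\subset\cdots\subset[0,\bar c]$, each containing $0$ and $\bar c$, whose mesh size $\delta(\mathcal S^n)$ (maximal gap between consecutive elements) tends to $0$. For $(x,c)\in[0,\infty)\times[0,\bar c]$ let $\tilde c^n=\max\{c'\in\mathcal S^n: c'\le c\}$ and $V^n(x,c)=V^{\mathcal S^n}(x,\tilde c^n)$. Then $V^n(x,c)$ is non-decreasing in $n$ and bounded by $V^{[0,\bar c]}(x,c)$,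 and $\bar V(x,c):=\lim_{n\to\infty}V^n(x,c)$. *)

(* Defs.v *)
From HB Require Import structures.
From mathcomp Require Import all_boot all_order all_algebra.
From mathcomp Require Import all_classical all_reals all_analysis.
Set Implicit Arguments. Unset Strict Implicit. Unset Printing Implicit Defensive.
Import Order.TTheory GRing.Theory Num.Theory.
Import numFieldNormedType.Exports.
Local Open Scope classical_set_scope.
Local Open Scope ring_scope.

Definition incr {R : realType} {Omega : Type} (W : R -> Omega -> R) (s t : R) :
  Omega -> R := fun w => W t w - W s w.

Definition is_std_BM {R : realType} {d : measure_display} {Omega : measurableType d}
  (P : probability Omega R) (W : R -> Omega -> R) : Prop :=
  [/\ (forall t, 0 <= t -> measurable_fun setT (W t)),
      (forall w, W 0 w = 0),
      (forall w, {within `[0, +oo[, continuous (fun t => W t w)}),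
      (forall s t (B : set R), 0 <= s -> s < t -> measurable B ->
         P (incr W s t @^-1` B) = normal_prob 0 (Num.sqrt (t - s)) B) &
      (forall (n : nat) (t : nat -> R) (B : nat -> set R),
         0 <= t 0%N -> (forall i, (i < n)%N -> t i <= t i.+1) ->
         (forall i, measurable (B i)) ->
         P (\bigcap_(i < n) (incr W (t i) (t i.+1) @^-1` B i)) =
         \big[*%E/1%E]_(i < n) P (incr W (t i) (t i.+1) @^-1` B i))].

Definition Xproc {R : realType} {Omega : Type} (W : R -> Omega -> R) (x mu sigma : R) :
  R -> Omega -> R := fun t w => x + mu * t + sigma * W t w.

Definition nat_sigma {R : realType} {Omega : Type} (X : R -> Omega -> R) (t : R) :
  set (set Omega) :=
  <<s [set A | exists s (B : set R), [/\ 0 <= s <= t, measurable B & A = X s @^-1` B]] >>.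

Definition completed_filtration {R : realType} {d : measure_display}
  {Omega : measurableType d} (P : probability Omega R) (X : R -> Omega -> R) (t : R) :
  set (set Omega) :=
  [set A | exists B N, [/\ nat_sigma X t B, measurable N, P N = 0%E &
                         (A `\` B) `|` (B `\` A) `<=` N]].

Definition admissible {R : realType} {d : measure_display} {Omega : measurableType d}
  (P : probability Omega R) (W : R -> Omega -> R) (x mu sigma : R)
  (S : set R) (c : R) (C : R -> Omega -> R) : Prop :=
  [/\ (forall w s t, 0 <= s -> s <= t -> C t w <= C s w),
      (forall w t, 0 <= t -> (fun u => C u w) @ t^'+ --> C t w),
      (forall t, 0 <= t -> forall B : set R, measurable B ->
          completed_filtration P (Xproc W x mu sigma) t (C t @^-1` B)) &
      (forall w t, 0 <= t -> S (C t w) /\ C t w <= c)].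

Definition XC {R : realType} {Omega : Type} (W : R -> Omega -> R) (x mu sigma : R)
  (C : R -> Omega -> R) : R -> Omega -> R :=
  fun t w => Xproc W x mu sigma t w
             - Rintegral (@lebesgue_measure R) [set u | 0 <= u <= t] (fun s => C s w).

Definition ruin_time {R : realType} {Omega : Type} (W : R -> Omega -> R) (x mu sigma : R)
  (C : R -> Omega -> R) (w : Omega) : \bar R :=
  ereal_inf [set t%:E | t in [set t | 0 <= t /\ XC W x mu sigma C t w < 0]].

Definition Jval {R : realType} {d : measure_display} {Omega : measurableType d}
  (P : probability Omega R) (W : R -> Omega -> R) (x mu sigma q Lam : R)
  (C : R -> Omega -> R) : \bar R :=
  (\int[P]_w
     (\int[@lebesgue_measure R]_(s in [set s : R | (0 <= s)%R /\ (s%:E < ruin_time W x mu sigma C w)%E])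
        ((expR (- (q * s)) * (C s w + Lam))%R%:E)))%E.

Definition Vval {R : realType} {d : measure_display} {Omega : measurableType d}
  (P : probability Omega R) (W : R -> Omega -> R) (mu sigma q Lam : R)
  (S : set R) (x c : R) : \bar R :=
  ereal_sup [set Jval P W x mu sigma q Lam C | C in admissible P W x mu sigma S c].

Definition mesh {R : realType} (S : set R) : R :=
  sup [set g | exists a b, [/\ S a, S b, a < b,
                 (forall y, S y -> ~ (a < y /\ y < b)) & g = b - a]].

Definition ctilde {R : realType} (S : set R) (c : R) : R :=
  sup [set c' | S c' /\ c' <= c].

Definition Vn {R : realType} {d : measure_display} {Omega : measurableType d}
  (P : probability Omega R) (W : R -> Omega -> R) (mu sigma q Lam : R)
  (Sn : nat -> set R) (n : nat) (x c : R) : \bar R :=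
  Vval P W mu sigma q Lam (Sn n) x (ctilde (Sn n) c).

Definition Vbar {R : realType} {d : measure_display} {Omega : measurableType d}
  (P : probability Omega R) (W : R -> Omega -> R) (mu sigma q Lam : R)
  (Sn : nat -> set R) (x c : R) : \bar R :=
  limn (fun n => Vn P W mu sigma q Lam Sn n x c).

(* Main.v *)
Require Import Defs.
From HB Require Import structures.
From mathcomp Require Import all_boot all_order all_algebra.
From mathcomp Require Import all_classical all_reals all_analysis.
From mathcomp Require Import lra ring measurable_realfun.
Import Order.TTheory GRing.Theory Num.Theory.
Import numFieldNormedType.Exports.
Local Open Scope classical_set_scope.
Local Open Scope ring_scope.

Section IntLemmas.
Local Open Scope ereal_scope.
Context d (T : measurableType d) (R : realType) (mu : {measure set T -> \bar R}).
Import HBNNSimple.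

Lemma int_mono (D : set T) (f g : T -> \bar R) :
  (forall x, D x -> 0 <= f x) -> (forall x, D x -> f x <= g x) ->
  \int[mu]_(x in D) f x <= \int[mu]_(x in D) g x.
Proof.
move=> f0 fg; rewrite (integral_mkcond D f) (integral_mkcond D g).
have f0' x : 0 <= (f \_ D) x by apply: erestrict_ge0.
have g0' x : 0 <= (g \_ D) x.
  by apply: erestrict_ge0 => y Dy; exact: le_trans (f0 y Dy) (fg y Dy).
rewrite !ge0_integralTE //.
apply: le_ereal_sup => _ [h hf <-]; exists h => //= x.
exact: le_trans (hf x) (lee_restrict fg x).
Qed.

Lemma int_scale (D : set T) (f : T -> \bar R) (k : R) : (0 < k)%R ->
  (forall x, D x -> 0 <= f x) ->
  \int[mu]_(x in D) (k%:E * f x) <= k%:E * \int[mu]_(x in D) f x.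
Proof.
move=> k0 f0; rewrite (integral_mkcond D) (integral_mkcond D f) erestrict_scale.
have f0' x : 0 <= (f \_ D) x by apply: erestrict_ge0.
rewrite !ge0_integralTE //; last by move=> x; rewrite mule_ge0// lee_fin ltW.
apply: ge_ereal_sup => _ [h hf <-].
have ki0 : (0 <= k^-1)%R by rewrite invr_ge0 ltW.
pose h' := scale_nnsfun h ki0.
have -> : sintegral mu h = k%:E * sintegral mu h'.
  rewrite /h' /scale_nnsfun sintegralrM muleA -EFinM divff ?gt_eqF// mul1e.
  by apply: eq_sintegral => x.
rewrite lee_pmul2l ?lte_fin //; apply: ereal_sup_ubound; exists h' => //= x.
rewrite /h' /= -(@lee_pmul2l _ k%:E) ?lte_fin// (le_trans _ (hf x))//.
by rewrite -EFinM mulrA divff ?gt_eqF// mul1r.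
Qed.

Lemma int_subset (A B : set T) (f : T -> \bar R) : A `<=` B ->
  (forall x, B x -> 0 <= f x) ->
  \int[mu]_(x in A) f x <= \int[mu]_(x in B) f x.
Proof.
move=> AB f0; rewrite (integral_mkcond A) (integral_mkcond B).
apply: int_mono => x _; first by apply: erestrict_ge0 => y /AB; exact: f0.
rewrite /patch; case: ifPn => xA; last by case: ifPn => // /set_mem/f0.
by rewrite ifT// inE; apply: AB; exact/set_mem.
Qed.

End IntLemmas.
Arguments int_mono {d T R mu D f g}.
Arguments int_scale {d T R mu D f k}.
Arguments int_subset {d T R mu A B f}.


Section FinMax.
Context {R : realType}.

Lemma seq_max (s : seq R) x : x \in s ->
  exists2 m, m \in s & forall y, y \in s -> y <= m.
Proof.
elim: s x => // a s IH x _.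
case: s IH => [|b s] IH.
  by exists a; rewrite ?inE // => y; rewrite inE => /eqP->.
have [m ms mmax] := IH b (mem_head _ _).
have [am|ma] := leP a m.
  exists m; first by rewrite inE ms orbT.
  by move=> y; rewrite inE => /predU1P[->//|/mmax].
exists a; first exact: mem_head.
move=> y; rewrite inE => /predU1P[->//|/mmax ym]; exact: le_trans ym (ltW ma).
Qed.

Lemma seq_min (s : seq R) x : x \in s ->
  exists2 m, m \in s & forall y, y \in s -> m <= y.
Proof.
elim: s x => // a s IH x _.
case: s IH => [|b s] IH.
  by exists a; rewrite ?inE // => y; rewrite inE => /eqP->.
have [m ms mmin] := IH b (mem_head _ _).
have [am|ma] := leP a m.
  exists a; first exact: mem_head.
  by move=> y; rewrite inE => /predU1P[->//|/mmin]; apply: le_trans.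
exists m; first by rewrite inE ms orbT.
by move=> y; rewrite inE => /predU1P[->|/mmin//]; exact: ltW.
Qed.

Lemma fin_max (A : set R) x : finite_set A -> A x ->
  A (sup A) /\ forall y, A y -> y <= sup A.
Proof.
move=> /finite_seqP[s ->] xs.
have [m ms mmax] := @seq_max s x xs.
have -> : sup [set` s] = m.
  apply/eqP; rewrite eq_le; apply/andP; split.
    by apply: ge_sup; [exists m | move=> y /mmax].
  apply: sup_upper_bound => //; split; first by exists m.
  by exists m => y /mmax.
by split => // y /mmax.
Qed.

Lemma fin_min (A : set R) x : finite_set A -> A x ->
  exists2 m, A m & forall y, A y -> m <= y.
Proof.
move=> /finite_seqP[s ->] xs.
have [m ms mmin] := @seq_min s x xs.
by exists m => // y /mmin.
Qed.

End FinMax.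


Definition gfun {R : realType} (S : set R) (y : R) : R :=
  sup [set s | S s /\ (s < y \/ s = 0)].

Section Grid.
Context {R : realType} (S : set R) (cbar : R).
Hypotheses (finS : finite_set S) (S0 : S 0) (Scb : S cbar)
  (Sin : S `<=` [set y | 0 <= y <= cbar]) (cb0 : 0 < cbar).

Let Gfin y : finite_set [set s | S s /\ (s < y \/ s = 0)].
Proof. by apply: sub_finite_set finS => s []. Qed.

Let Gmax y := @fin_max _ _ 0 (Gfin y) (conj S0 (or_intror erefl)).

Lemma gS y : S (gfun S y).
Proof using finS S0 Scb Sin cb0. by case: (Gmax y) => -[]. Qed.

Lemma g_ge0 y : 0 <= gfun S y.
Proof using finS S0 Scb Sin cb0. by have /Sin/andP[] := gS y. Qed.

Lemma g_lt y : gfun S y < y \/ gfun S y = 0.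
Proof using finS S0 Scb Sin cb0. by case: (Gmax y) => -[]. Qed.

Lemma g_max y s : S s -> s < y -> s <= gfun S y.
Proof using finS S0 Scb Sin cb0. by move=> Ss sy; case: (Gmax y) => _; apply; split => //; left. Qed.

Lemma g_le y : 0 <= y -> gfun S y <= y.
Proof using finS S0 Scb Sin cb0. by move=> y0; case: (g_lt y) => [/ltW|->]. Qed.

Lemma g_mono y y' : y <= y' -> gfun S y <= gfun S y'.
Proof using finS S0 Scb Sin cb0.
move=> yy; case: (Gmax y) => -[Sg H] _; case: (Gmax y') => _; apply; split => //.
by case: H => [gy|]; [left; exact: lt_le_trans gy yy|right].
Qed.

Lemma ctilde_prop c : 0 <= c ->
  [/\ S (ctilde S c), ctilde S c <= c & forall s, S s -> s <= c -> s <= ctilde S c].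
Proof using finS S0 Scb Sin cb0.
move=> c0; have fin : finite_set [set c' | S c' /\ c' <= c].
  by apply: sub_finite_set finS => s [].
have [[Sct ctc] H] := @fin_max _ _ 0 fin (conj S0 c0).
by split => // s Ss sc; apply: H.
Qed.

Let gapset := [set g | exists a b, [/\ S a, S b, a < b,
                 (forall y, S y -> ~ (a < y /\ y < b)) & g = b - a]].

Lemma gap_pos y : 0 < y <= cbar -> y - gfun S y <= mesh S.
Proof using finS S0 Scb Sin cb0.
move=> /andP[y0 ycb].
have gy : gfun S y < y by case: (g_lt y) => // ->.
have fin : finite_set [set s | S s /\ y <= s] by apply: sub_finite_set finS => s [].
have [b [Sb yb] bmin] := @fin_min _ _ cbar fin (conj Scb ycb).
have gb : gfun S y < b by exact: lt_le_trans gy yb.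
have gapb : gapset (b - gfun S y).
  exists (gfun S y), b; split => //; first exact: gS.
  move=> s Ss [gs sb]; have [sy|ys] := ltP s y.
    by have := @g_max y s Ss sy; rewrite leNgt gs.
  by have := bmin s (conj Ss ys); rewrite leNgt sb.
apply: le_trans (_ : b - gfun S y <= mesh S).
  by rewrite lerD2r.
apply: sup_upper_bound => //; split; first by exists (b - gfun S y).
exists cbar => _ [a [b' [Sa Sb' _ _ ->]]].
have /andP[a0 _] := Sin _ Sa; have /andP[_ b'c] := Sin _ Sb'.
by rewrite lerBlDr (le_trans b'c)// lerDl.
Qed.

Lemma g_gap y : 0 <= y <= cbar -> y - gfun S y <= mesh S.
Proof using finS S0 Scb Sin cb0.
move=> /andP[y0 ycb]; have [y0'|] := ltP 0 y; first by apply: gap_pos; rewrite y0' ycb.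
move=> y_le0; have -> : y = 0 by apply/eqP; rewrite eq_le y_le0 y0.
apply: le_trans (@gap_pos cbar _); last by rewrite cb0 lexx.
have := g_ge0 0; have := @g_le cbar (ltW cb0).
have := g_ge0 cbar; lra.
Qed.

End Grid.


Section Adm.
Context {R : realType} {d : measure_display} {Omega : measurableType d}
  (P : probability Omega R) (W : R -> Omega -> R) (x mu sigma : R).
Context (S : set R) (cbar : R).
Hypotheses (finS : finite_set S) (S0 : S 0) (Scb : S cbar)
  (Sin : S `<=` [set y | 0 <= y <= cbar]) (cb0 : 0 < cbar).

Let gS' := @gS _ S cbar finS S0 Scb Sin cb0.
Let g_ge0' := @g_ge0 _ S cbar finS S0 Scb Sin cb0.
Let g_lt' := @g_lt _ S cbar finS S0 Scb Sin cb0.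
Let g_max' := @g_max _ S cbar finS S0 Scb Sin cb0.
Let g_le' := @g_le _ S cbar finS S0 Scb Sin cb0.
Let g_mono' := @g_mono _ S cbar finS S0 Scb Sin cb0.
Let ct' := @ctilde_prop _ S cbar finS S0 Scb Sin cb0.

Lemma adm_g (S' : set R) (c1 c : R) (C : R -> Omega -> R) :
  S' `<=` [set y | 0 <= y <= cbar] -> c1 <= c -> 0 <= c ->
  admissible P W x mu sigma S' c1 C ->
  admissible P W x mu sigma S (ctilde S c) (fun t w => gfun S (C t w)).
Proof using finS S0 Scb Sin cb0.
move=> S'in c1c c0 [Cmono Crc Cad Cval]; split.
- by move=> w s t s0 st; apply: g_mono'; exact: Cmono.
- move=> w t t0; apply: cvg_near_cst.
  have [aC|Ca] := ltP (gfun S (C t w)) (C t w).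
    near=> u.
    have tu : t < u by near: u; exact: nbhs_right_gt.
    have Cu : gfun S (C t w) < C u w.
      by near: u; exact: (cvgr_gt _ (Crc w t t0) _ aC).
    apply/eqP; rewrite eq_le; apply/andP; split.
      by apply: g_mono'; apply: Cmono => //; exact: ltW.
    exact: g_max' (gS' _) Cu.
  have a0 : gfun S (C t w) = 0.
    by case: (g_lt' (C t w)) => // h; move: Ca; rewrite leNgt h.
  near=> u.
  have tu : t < u by near: u; exact: nbhs_right_gt.
  apply/eqP; rewrite eq_le; apply/andP; split; last by rewrite a0; exact: g_ge0'.
  by apply: g_mono'; apply: Cmono => //; exact: ltW.
- move=> t t0 B mB.
  have mg : measurable_fun setT (gfun S).
    by apply: nondecreasing_measurable => // a b ab; exact: g_mono'.
  have := mg measurableT B mB; rewrite setTI => mgB.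
  exact: (Cad t t0 _ mgB).
- move=> w t t0; split; first exact: gS'.
  have [_ _ ctmax] := ct' c c0; apply: ctmax; first exact: gS'.
  have [/S'in/andP[C0 _] Cc1] := Cval w t t0.
  apply: le_trans (g_le' _ C0) _; exact: le_trans Cc1 c1c.
Unshelve. all: by end_near. Qed.

End Adm.

Lemma nat_sigmaT {R : realType} {Omega : Type} (X : R -> Omega -> R) t :
  nat_sigma X t setT /\ nat_sigma X t set0.
Proof.
have [h0 hC _] := smallest_sigma_algebra setT
  [set A | exists s (B : set R), [/\ 0 <= s <= t, measurable B & A = X s @^-1` B]].
split; last exact: h0.
by have := hC _ h0; rewrite setD0.
Qed.

Lemma adm_cst {R : realType} {d : measure_display} {Omega : measurableType d}
  (P : probability Omega R) (W : R -> Omega -> R) (x mu sigma : R) (S : set R) (c k : R) :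
  S k -> k <= c -> admissible P W x mu sigma S c (fun _ _ => k).
Proof.
move=> Sk kc; split => //.
- by move=> w t _; exact: cvg_cst.
- move=> t _ B _.
  have [hT h0] := nat_sigmaT (Xproc W x mu sigma) t.
  have [kB|kB] := pselect (B k).
    exists setT, set0; split; [exact: hT|exact: measurable0|exact: measure0|].
    by move=> w [[_ H]|[_ H]]; exfalso; apply: H.
  exists set0, set0; split; [exact: h0|exact: measurable0|exact: measure0|].
  move=> w [[H _]|[]] //; exfalso; exact: kB H.
Qed.


Lemma Rint_mono {R : realType} (t K : R) (f g : R -> R) :
  (forall s, 0 <= s <= t -> 0 <= f s <= g s) ->
  (forall s, 0 <= s <= t -> g s <= K) ->
  Rintegral (@lebesgue_measure R) [set u | 0 <= u <= t] f <=
  Rintegral (@lebesgue_measure R) [set u | 0 <= u <= t] g.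
Proof.
move=> fg gK.
set D := [set u | 0 <= u <= t].
have Deq : D = `[0, t]%classic.
  by apply/seteqP; split => u; rewrite /= in_itv.
have mD : measurable D by rewrite Deq.
have f0 s : D s -> (0 <= (f s)%:E)%E.
  by move=> /fg /andP[]; rewrite lee_fin.
have g0 s : D s -> (0 <= (g s)%:E)%E.
  by move=> /fg /andP[f0' fg']; rewrite lee_fin (le_trans f0').
have fgE : (\int[lebesgue_measure]_(x in D) (f x)%:E <=
   \int[lebesgue_measure]_(x in D) (g x)%:E)%E.
  by apply: int_mono => // s /fg/andP[_]; rewrite lee_fin.
have gfin : (\int[lebesgue_measure]_(x in D) (g x)%:E < +oo)%E.
  apply: le_lt_trans (_ : (\int[lebesgue_measure]_(x in D) (cst K%:E x) < +oo)%E).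
    by apply: int_mono => // s /gK; rewrite lee_fin.
  rewrite integral_cst // Deq; have := lebesgue_measure_itv `[0, t]; rewrite /= => ->.
  case: ifP => _; rewrite ?mule0 ?ltry // -?EFinD -?EFinM ?ltry //.
unfold Rintegral; apply: fine_le => //.
- rewrite ge0_fin_numE; [exact: le_lt_trans fgE gfin|exact: integral_ge0].
- by rewrite ge0_fin_numE //; exact: integral_ge0.
Qed.

Section Jcmp.
Context {R : realType} {d : measure_display} {Omega : measurableType d}
  (P : probability Omega R) (W : R -> Omega -> R) (x mu sigma q Lam : R).
Hypotheses (q0 : 0 < q) (L0 : 0 < Lam).

Lemma ruin_le (C Cn : R -> Omega -> R) (cbar : R) w :
  (forall s, 0 <= s -> 0 <= Cn s w <= C s w /\ C s w <= cbar) ->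
  (ruin_time W x mu sigma C w <= ruin_time W x mu sigma Cn w)%E.
Proof.
move=> HC; apply: le_ereal_inf => _ [t [t0 ht] <-]; exists t => //; split => //.
apply: le_lt_trans ht; rewrite /XC lerD2l lerN2.
apply: (@Rint_mono _ t cbar) => s /andP[s0 st].
  by have [] := HC s s0.
by have [] := HC s s0.
Qed.

Lemma J_cmp (C Cn : R -> Omega -> R) (cbar del : R) : 0 <= del ->
  (forall w s, 0 <= s -> [/\ 0 <= Cn s w, Cn s w <= C s w, C s w <= cbar
                         & C s w <= Cn s w + del]) ->
  (Jval P W x mu sigma q Lam C <= (1 + del/Lam)%:E * Jval P W x mu sigma q Lam Cn)%E.
Proof.
move=> d0 HC.
have k0 : 0 < 1 + del / Lam by rewrite ltr_pwDl // divr_ge0 // ltW.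
have inner0 (D : set Omega) (C' : R -> Omega -> R) :
    (forall w s, 0 <= s -> 0 <= C' s w) -> forall w, D w ->
    (0 <= \int[@lebesgue_measure R]_(s in [set s : R | (0 <= s)%R /\
       (s%:E < ruin_time W x mu sigma C' w)%E])
        ((expR (- (q * s)) * (C' s w + Lam))%R%:E))%E.
  move=> H w _; apply: integral_ge0 => s [s0 _].
  by rewrite lee_fin mulr_ge0 ?expR_ge0 // addr_ge0 ?H // ltW.
have Cge0 w s : 0 <= s -> 0 <= C s w.
  by move=> s0; have [a b _ _] := HC w s s0; exact: le_trans a b.
have Cnge0 w s : 0 <= s -> 0 <= Cn s w by move=> s0; have [] := HC w s s0.
rewrite /Jval; apply: (le_trans _ (int_scale k0 _)); last first.
  by move=> w; apply: (inner0 setT Cn Cnge0).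
apply: int_mono => w _; first exact: (inner0 setT C Cge0).
have tle := @ruin_le C Cn cbar w (fun s s0 => let: And4 a b c _ := HC w s s0 in
  conj (introT andP (conj a b)) c).
apply: (le_trans _ (int_scale k0 _)); last first.
  by move=> s [s0 _]; rewrite lee_fin mulr_ge0 ?expR_ge0 // addr_ge0 ?Cnge0 // ltW.
apply: (@le_trans _ _ (\int[lebesgue_measure]_(s in
   [set s : R | (0 <= s)%R /\ (s%:E < ruin_time W x mu sigma C w)%E])
        ((1 + del / Lam)%:E * (expR (- (q * s)) * (Cn s w + Lam))%R%:E))%E).
  apply: int_mono => s [s0 _].
    by rewrite lee_fin mulr_ge0 ?expR_ge0 // addr_ge0 ?Cge0 // ltW.
  rewrite -EFinM lee_fin mulrCA ler_pM2l ?expR_gt0 //.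
  have [a b c e] := HC w s s0.
  have eq : (1 + del / Lam) * (Cn s w + Lam) = Cn s w + Lam + del + del * Cn s w / Lam.
    by field; rewrite gt_eqF.
  have : 0 <= del * Cn s w / Lam by rewrite divr_ge0 ?mulr_ge0 // ltW.
  rewrite eq; lra.
apply: int_subset => [s [s0 st]|s [s0 _]].
  by split => //; exact: lt_le_trans st tle.
by rewrite mule_ge0 // lee_fin ?(ltW k0) // mulr_ge0 ?expR_ge0 // addr_ge0 ?Cnge0 // ltW.
Qed.

Lemma J_bound (C : R -> Omega -> R) (cbar : R) :
  (forall w s, 0 <= s -> 0 <= C s w <= cbar) ->
  (0 <= Jval P W x mu sigma q Lam C <= ((cbar + Lam) / q)%:E)%E.
Proof.
move=> HC.
have inner0 w : (0 <= \int[@lebesgue_measure R]_(s in [set s : R | (0 <= s)%R /\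
       (s%:E < ruin_time W x mu sigma C w)%E])
        ((expR (- (q * s)) * (C s w + Lam))%R%:E))%E.
  apply: integral_ge0 => s [s0 _].
  by have /andP[c0 _] := HC w s s0; rewrite lee_fin mulr_ge0 ?expR_ge0 // addr_ge0 // ltW.
have cb0 : 0 <= cbar by have /andP[a b] := HC (point) 0 (lexx 0); exact: le_trans a b.
have K0 : 0 < (cbar + Lam) / q by rewrite divr_gt0 // ltr_wpDl.
apply/andP; split; first by apply: integral_ge0 => w _; exact: inner0.
rewrite /Jval; apply: (@le_trans _ _ (\int[P]_(w in setT) (cst ((cbar + Lam) / q)%:E w))%E); last first.
  rewrite integral_cst // [X in (_ * X <= _)%E]probability_setT mule1 //.
apply: int_mono => w _; first exact: inner0.
apply: (@le_trans _ _ (\int[@lebesgue_measure R]_(s in setT)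
   (((cbar + Lam) / q)%:E * (exponential_pdf q s)%:E))%E).
  apply: (@le_trans _ _ (\int[@lebesgue_measure R]_(s in [set s : R | (0 <= s)%R /\
       (s%:E < ruin_time W x mu sigma C w)%E])
   (((cbar + Lam) / q)%:E * (exponential_pdf q s)%:E))%E).
    apply: int_mono => s [s0 _].
      by have /andP[c0 _] := HC w s s0; rewrite lee_fin mulr_ge0 ?expR_ge0 // addr_ge0 // ltW.
    rewrite -EFinM lee_fin exponential_pdfE // mulrA divfK ?gt_eqF // mulNr mulrC.
    by have /andP[_ c1] := HC w s s0; rewrite ler_pM2r ?expR_gt0 // lerD2r.
  apply: int_subset => // s _.
  by rewrite -EFinM lee_fin mulr_ge0 ?(exponential_pdf_ge0 (ltW q0)) // ltW.
apply: le_trans (int_scale K0 _) _.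
  by move=> s _; rewrite lee_fin (exponential_pdf_ge0 (ltW q0)).

by rewrite integral_exponential_pdf // mule1.
Qed.

End Jcmp.


Theorem proposition5p1 (R : realType) (d : measure_display) (Omega : measurableType d)
  (P : probability Omega R) (W : R -> Omega -> R)
  (mu sigma q Lam cbar : R) (Sn : nat -> set R) :
  is_std_BM P W -> 0 < sigma -> 0 < q -> 0 < Lam -> 0 < cbar ->
  Sn 0%N = [set 0; cbar] ->
  (forall n, finite_set (Sn n)) ->
  (forall n, Sn n `<=` Sn n.+1) ->
  (forall n, Sn n `<=` [set y | 0 <= y <= cbar]) ->
  (forall n, Sn n 0 /\ Sn n cbar) ->
  (fun n => mesh (Sn n)) @ \oo --> (0 : R) ->
  forall eps : R, 0 < eps -> exists N : nat, forall n : nat, (N <= n)%N ->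
    forall x c : R, 0 <= x -> 0 <= c <= cbar ->
      (`| Vn P W mu sigma q Lam Sn n x c - Vbar P W mu sigma q Lam Sn x c | <= eps%:E)%E.
Proof.
move=> _ _ q0 L0 cb0 _ finS HS Sin S0cb mesh0 eps eps0.
have S0 n : Sn n 0 by case: (S0cb n).
have Scb n : Sn n cbar by case: (S0cb n).
have nest n m : (n <= m)%N -> Sn n `<=` Sn m.
  elim: m => [|m IH]; first by rewrite leqn0 => /eqP->.
  rewrite leq_eqVlt => /predU1P[->//|]; rewrite ltnS => /IH h.
  exact: subset_trans h (HS m).
pose ct n c := ctilde (Sn n) c.
have ctP n c : 0 <= c -> [/\ Sn n (ct n c), ct n c <= c
    & forall s, Sn n s -> s <= c -> s <= ct n c].
  exact: (@ctilde_prop _ (Sn n) cbar (finS n) (S0 n) (Scb n) (Sin n) cb0).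
have gge0 n := @g_ge0 _ (Sn n) cbar (finS n) (S0 n) (Scb n) (Sin n) cb0.
have gle n := @g_le _ (Sn n) cbar (finS n) (S0 n) (Scb n) (Sin n) cb0.
have ggap n := @g_gap _ (Sn n) cbar (finS n) (S0 n) (Scb n) (Sin n) cb0.
pose M := (cbar + Lam) / q.
have M0 : 0 < M by rewrite divr_gt0 // ltr_wpDl // ltW.
have Vbnd n x c : 0 <= c ->
    (0 <= Vn P W mu sigma q Lam Sn n x c <= M%:E)%E.
  move=> c0; have [ctS ctc _] := ctP n c c0.
  apply/andP; split.
    apply: (@le_trans _ _ (Jval P W x mu sigma q Lam (fun _ _ => ct n c))).
      by have /andP[] := @J_bound R d Omega P W x mu sigma q Lam q0 L0
        (fun _ _ => ct n c) cbar (fun w s _ => Sin n _ ctS).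
    apply: ereal_sup_ubound; exists (fun _ _ => ct n c) => //.
    exact: adm_cst.
  apply: ge_ereal_sup => _ [C [_ _ _ Cval] <-].
  by have /andP[] := @J_bound R d Omega P W x mu sigma q Lam q0 L0 C cbar
    (fun w s s0 => Sin n _ (Cval w s s0).1).
have Vmono x c : 0 <= c -> {homo (fun n => Vn P W mu sigma q Lam Sn n x c) :
    n m / (n <= m)%N >-> (n <= m)%E}.
  move=> c0 n m nm; apply: ereal_sup_le => _ [C [C1 C2 C3 C4] <-].
  exists C => //; split => // w t t0; have [Sc Cc] := C4 w t t0; split.
    exact: nest nm _ Sc.
  have [ctS ctc _] := ctP n c c0; have [_ _ ctm] := ctP m c c0.
  exact: le_trans Cc (ctm _ (nest _ _ nm _ ctS) ctc).
have mesh_ge0 n : 0 <= mesh (Sn n).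
  have := ggap n 0; rewrite lexx ltW // => /(_ isT).
  have := gge0 n 0; have := gle n 0 (lexx 0); lra.
have key n m x c : 0 <= c ->
    (Vn P W mu sigma q Lam Sn m x c <=
     (1 + mesh (Sn n) / Lam)%:E * Vn P W mu sigma q Lam Sn n x c)%E.
  move=> c0; apply: ge_ereal_sup => _ [C Cadm <-].
  have [ctmS ctmc _] := ctP m c c0.
  have Cnadm := @adm_g _ _ _ P W x mu sigma (Sn n) cbar (finS n) (S0 n) (Scb n) (Sin n) cb0 _ _ _ C (Sin m) ctmc c0 Cadm.
  case: Cadm => _ _ _ Cval.
  apply: le_trans (@J_cmp _ _ _ P W x mu sigma q Lam L0 C
     (fun s w => gfun (Sn n) (C s w)) cbar _ (mesh_ge0 n) _) _.
    move=> w s s0; have [/Sin/andP[Cs0 Csc] _] := Cval w s s0.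
    split.
    - exact: gge0.
    - exact: gle.
    - exact: Csc.
    - have := ggap n (C s w); rewrite Cs0 Csc => /(_ isT); lra.
  rewrite lee_pmul2l ?lte_fin ?ltr_pwDl ?divr_ge0 ?(ltW L0) //.
  apply: ereal_sup_ubound; exists (fun s w => gfun (Sn n) (C s w)) => //.
pose e' := eps * Lam / M.
have e'0 : 0 < e' by rewrite divr_gt0 // mulr_gt0.
have [N _ HN] := cvgr_dist_le _ _ mesh0 _ e'0.
exists N => n Nn x c _ /andP[c0 cc].
have dle : mesh (Sn n) <= e'.
  by have := HN n Nn; rewrite /= sub0r normrN ger0_norm.
have VbE : Vbar P W mu sigma q Lam Sn x c =
    ereal_sup (range (fun m => Vn P W mu sigma q Lam Sn m x c)).
  rewrite /Vbar; apply/cvg_lim => //; apply: ereal_nondecreasing_cvgn; exact: Vmono.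
have /andP[v0 vM] := Vbnd n x c c0.
have vb : (Vn P W mu sigma q Lam Sn n x c <= Vbar P W mu sigma q Lam Sn x c)%E.
  by rewrite VbE; apply: ereal_sup_ubound; exists n.
have bv : (Vbar P W mu sigma q Lam Sn x c <=
    (1 + mesh (Sn n) / Lam)%:E * Vn P W mu sigma q Lam Sn n x c)%E.
  by rewrite VbE; apply: ge_ereal_sup => _ [m _ <-]; exact: key.
have dn0 := mesh_ge0 n.
move: (Vn P W mu sigma q Lam Sn n x c) (Vbar P W mu sigma q Lam Sn x c) v0 vM vb bv.
move=> [r| |] [s| |] //=; rewrite ?lee_fin => r0 rM rs; rewrite -?EFinM ?lee_fin // => sr.
have h1 : mesh (Sn n) * r <= eps * Lam.
  apply: le_trans (ler_wpM2l dn0 rM) _.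
  by rewrite -ler_pdivlMr.
have h2 : mesh (Sn n) * r / Lam <= eps by rewrite ler_pdivrMr.
have h3 : (1 + mesh (Sn n) / Lam) * r = r + mesh (Sn n) * r / Lam.
  by field; rewrite gt_eqF.
rewrite ler_norml; lra.
Qed.
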